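(* Let $L>0$, $N\ge1$, and let $x=(x_1,\dots,x_{2N})\in(\mathbb{R}_{>0})^{2N}$ satisfy the highest weight condition and $\sum_{i=1}^{2N}x_i\le L$. Run Algorithm II from $x^{(1)}=x$, and let $u$, $\mu^{(i)}$, $\nu^{(i)}$, $y^{(i)}$ and the runs of zeros be as produced there. Put $\lambda^{(i)}=\sum_{l=1}^i\mu^{(l)}$ and $$q_i=L-2\sum_{k=1}^{u}\min(\lambda^{(i)},\lambda^{(k)})\,\nu^{(k)}\qquad(1\le i\le u).$$ For $1\le i\le u$ and $1\le j\le k^{(i)}$ let $I^{(i)}_j$ be the position in $y^{(i)}$ of the first entry of the $j$th run of zeros, and $r^{(i)}_j=\sum_{l=1}^{I^{(i)}_j-1}y^{(i)}_l$. Then $0\le r^{(i)}_j\le q_i$ for all $1\le i\le u$ and $1\le j\le k^{(i)}$.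
   Context: Highest weight condition: a sequence $x_1,\dots,x_{2n}$ of nonnegative reals satisfies it if $\sum_{i=1}^k(x_{2i-1}-x_{2i})\ge0$ for all $1\le k\le n$. Algorithm II. Set $N^{(1)}=N$, $x^{(1)}=x$. Given $x^{(i)}=(x^{(i)}_1,\dots,x^{(i)}_{2N^{(i)}})$ of positive reals satisfying the highest weight condition: let $\mu^{(i)}=\min_j x^{(i)}_j$ and $y^{(i)}_j=x^{(i)}_j-\mu^{(i)}$. In the (linear, non-cyclic) array $y^{(i)}_1,\dots,y^{(i)}_{2N^{(i)}}$ consider the maximal runs of consecutive zeros (a lone zero counts as a run); say there are $k^{(i)}$ runs, numbered $1,\dots,k^{(i)}$ from left to right, with lengths $n^{(i)}_1,\dots,n^{(i)}_{k^{(i)}}$. Let $N^{(i+1)}=N^{(i)}-\sum_{j}\lceil n^{(i)}_j/2\rceil$ and $\nu^{(i)}=N^{(i)}-N^{(i+1)}$. If $N^{(i+1)}=0$, stop and set $u=i$. Otherwise form $x^{(i+1)}$ from $y^{(i)}$: (a) if a run of zeros is at the left end, delete it; (b) for every run of zeros lying between positive entries $a,b$, delete the zeros if the run length is even, and if odd delete the zeros and also replace $a,b$ by the single entry $a+b$; (c') if a run of zeros is at the right end, preceded by a positive entry $a$, delete the zeros, and if its length is odd also delete $a$. Repeat with $x^{(i+1)}$. *)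

(* Defs.v *)
(* Algorithm II over an arbitrary real field R
   (the statement is order-algebraic, so this is the reals or more general). *)
From HB Require Import structures.
From mathcomp Require Import all_boot all_order all_algebra.
Set Implicit Arguments. Unset Strict Implicit. Unset Printing Implicit Defensive.
Import Order.TTheory GRing.Theory Num.Theory.
Local Open Scope ring_scope.

Section AlgII.
Variable R : realFieldType.

(* Highest weight condition for x = (x_1,...,x_{2n}) (0-indexed here):
   sum_{i<k} (x_{2i} - x_{2i+1}) >= 0 for 1 <= k <= n. *)
Definition highest_weight (x : seq R) : Prop :=
  forall k : nat, (1 <= k <= (size x)./2)%N ->
    0 <= \sum_(i < k) (x`_(2 * i) - x`_(2 * i).+1).

Definition seqmin (x : seq R) : R := foldr Order.min (head 0 x) x.

Definition shiftmin (x : seq R) : seq R := [seq a - seqmin x | a <- x].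

(* Tokenisation of y: inl a = a nonzero entry a, inr m = maximal run of m zeros *)
Fixpoint tok (y : seq R) : seq (R + nat) :=
  match y with
  | [::] => [::]
  | a :: y' =>
      if a == 0 then
        match tok y' with
        | inr m :: t => inr m.+1 :: t
        | t => inr 1%N :: t
        end
      else inl a :: tok y'
  end.

(* (0-based start position, length) of each maximal run of zeros, left to right *)
Fixpoint runs_from (p : nat) (t : seq (R + nat)) : seq (nat * nat) :=
  match t with
  | [::] => [::]
  | inl _ :: t' => runs_from p.+1 t'
  | inr m :: t' => (p, m) :: runs_from (p + m)%N t'
  end.

Definition zero_runs (y : seq R) : seq (nat * nat) := runs_from 0 (tok y).

Definition nu_of (y : seq R) : nat :=
  sumn [seq uphalf r.2 | r <- zero_runs y].

(* Rebuild x^{(i+1)} from the tokens following a positive entry [cur]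
   (cur is the last output entry, still subject to merging / deletion):
   (b) interior run: even -> delete zeros; odd -> delete zeros and merge a,b into a+b;
   (c') right-end run: delete zeros, and if odd also delete the preceding a. *)
Fixpoint rebuild (cur : R) (t : seq (R + nat)) : seq R :=
  match t with
  | [::] => [:: cur]
  | inl b :: t' => cur :: rebuild b t'
  | inr m :: t' =>
      match t' with
      | [::] => if odd m then [::] else [:: cur]
      | inl b :: t'' => if odd m then rebuild (cur + b) t'' else cur :: rebuild b t''
      | inr _ :: _ => rebuild cur t'   (* impossible: runs are maximal *)
      end
  end.

(* (a) a run at the left end is deleted *)
Definition next_x (y : seq R) : seq R :=
  match tok y with
  | [::] => [::]
  | inl a :: t => rebuild a t
  | inr _ :: t =>
      match t with
      | inl a :: t' => rebuild a t'
      | _ => [::]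
      end
  end.

Definition algII_step (s : seq R * nat) : seq R * nat :=
  let y := shiftmin s.1 in (next_x y, (s.2 - nu_of y)%N).

(* state number i (1-based): (x^{(i)}, N^{(i)}) *)
Definition algII_state (x : seq R) (N i : nat) : seq R * nat :=
  iter i.-1 algII_step (x, N).

Definition algII_x (x : seq R) (N i : nat) : seq R := (algII_state x N i).1.
Definition algII_N (x : seq R) (N i : nat) : nat := (algII_state x N i).2.
Definition algII_mu (x : seq R) (N i : nat) : R := seqmin (algII_x x N i).
Definition algII_y (x : seq R) (N i : nat) : seq R := shiftmin (algII_x x N i).
Definition algII_nu (x : seq R) (N i : nat) : nat :=
  (algII_N x N i - algII_N x N i.+1)%N.
Definition algII_lambda (x : seq R) (N i : nat) : R :=
  \sum_(1 <= l < i.+1) algII_mu x N l.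
Definition algII_q (x : seq R) (N u : nat) (L : R) (i : nat) : R :=
  L - 2 * \sum_(1 <= k < u.+1)
            Order.min (algII_lambda x N i) (algII_lambda x N k) * (algII_nu x N k)%:R.

End AlgII.

(* Main.v *)
Require Import Defs.
From HB Require Import structures.
From mathcomp Require Import all_boot all_order all_algebra.
From mathcomp Require Import zify ring lra.
Import Order.TTheory GRing.Theory Num.Theory.
Local Open Scope ring_scope.

Section Tok.
Variable R : realFieldType.
Implicit Types (y : seq R) (t : seq (R + nat)).

Definition tsize t : nat := sumn [seq (if z is inr m then m else 1%N) | z <- t].
Definition tsum t : R := \sum_(z <- t) (if z is inl a then a else 0).
Definition tnu t : nat := sumn [seq (if z is inr m then uphalf m else 0%N) | z <- t].
Definition tnn t : bool := all (fun z => if z is inl a then 0 <= a else true) t.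
Fixpoint noadj t : bool :=
  match t with
  | inr _ :: ((inr _ :: _) as t') => false
  | _ :: t' => noadj t'
  | [::] => true
  end.

Lemma tsize_nil : tsize [::] = 0%N. Proof. by []. Qed.
Lemma tsize_l a t : tsize (inl a :: t) = (tsize t).+1. Proof. by []. Qed.
Lemma tsize_r m t : tsize (inr m :: t) = (m + tsize t)%N. Proof. by []. Qed.
Lemma tsum_nil : tsum [::] = 0. Proof. by rewrite /tsum big_nil. Qed.
Lemma tsum_l a t : tsum (inl a :: t) = a + tsum t. Proof. by rewrite /tsum big_cons. Qed.
Lemma tsum_r m t : tsum (inr m :: t) = tsum t. Proof. by rewrite /tsum big_cons add0r. Qed.
Lemma tnu_nil : tnu [::] = 0%N. Proof. by []. Qed.
Lemma tnu_l a t : tnu (inl a :: t) = tnu t. Proof. by []. Qed.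
Lemma tnu_r m t : tnu (inr m :: t) = (uphalf m + tnu t)%N. Proof. by []. Qed.
Definition tE := (tsize_nil, tsize_l, tsize_r, tsum_nil, tsum_l, tsum_r, tnu_nil, tnu_l, tnu_r).

Lemma tok_props y : [/\ tsize (tok y) = size y, tsum (tok y) = \sum_(a <- y) a
  & noadj (tok y)].
Proof.
elim: y => [|a y [IH1 IH2 IH3]] /=; first by split; rewrite ?tE ?big_nil.
rewrite big_cons.
case: eqP => [->|_].
  move: IH1 IH2 IH3; case: (tok y) => [|[b|m] t] IH1 IH2 IH3;
    rewrite !tE -IH1 -IH2 ?tE add0r; split => //.
by rewrite !tE IH1 IH2; split => //; move: IH3 => /=; case: (tok y).
Qed.

Lemma nu_runs p t : sumn [seq uphalf r.2 | r <- runs_from p t] = tnu t.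
Proof.
elim: t p => [|[a|m] t IH] p //=; by rewrite IH.
Qed.

Lemma uph2 m : (m <= (uphalf m).*2)%N.
Proof. by rewrite uphalfK leq_addl. Qed.

Lemma rebuild_props n t (cur : R) : (size t < n)%N -> 0 <= cur -> tnn t ->
  [/\ all (fun a => 0 <= a) (rebuild cur t),
      \sum_(a <- rebuild cur t) a <= cur + tsum t
    & ((tsize t).+1 <= size (rebuild cur t) + (tnu t).*2)%N].
Proof.
elim: n t cur => [|n IH] t cur //.
case: t => [|[b|m] t] /= Hs Hc Ht.
- by split; rewrite ?Hc ?big_cons ?big_nil ?tE ?addr0.
- move/andP: Ht => [Hb Ht].
  have [H1 H2 H3] := IH t b (ltnSE Hs) Hb Ht.
  split; rewrite /= ?Hc ?H1 ?big_cons ?tE //.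
    by rewrite lerD2l.
- case: t Hs Ht => [|[b|m'] t] Hs Ht /=.
  + case: ifP => Hm /=; split; rewrite ?big_cons ?big_nil ?tE ?Hc ?addr0 //.
    * by have := odd_uphalfK Hm; rewrite -!muln2; lia.
    * by have := even_uphalfK (negbT Hm); rewrite -!muln2; lia.
  + move: Ht => /= /andP [Hb Ht].
    case: ifP => Hm.
    * have [H1 H2 H3] := IH t (cur + b) (ltnW (ltnSE Hs)) (addr_ge0 Hc Hb) Ht.
      split; rewrite ?H1 ?tE //; first by rewrite addrA.
      by have := odd_uphalfK Hm; rewrite -!muln2 in H3 *; lia.
    * have [H1 H2 H3] := IH t b (ltnW (ltnSE Hs)) Hb Ht.
      split; rewrite /= ?Hc ?H1 ?big_cons ?tE //; first by rewrite lerD2l.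
      by have := even_uphalfK (negbT Hm); rewrite -!muln2 in H3 *; lia.
  + have [H1 H2 H3] := IH (inr m' :: t) cur (ltnSE Hs) Hc Ht.
    split; rewrite ?H1 ?tE //; first by move: H2; rewrite !tE.
    move: H3; rewrite /= !tE => H3; have := uph2 m; rewrite -!muln2 in H3 *; lia.
Qed.

Lemma tok_tnn y : all (fun a => 0 <= a) y -> tnn (tok y).
Proof.
elim: y => [|a y IH] //= /andP [Ha Hy]; have := IH Hy.
case: eqP => _; last by rewrite /tnn /= Ha.
by case: (tok y) => [|[b|m] t].
Qed.

Lemma next_props y : all (fun a => 0 <= a) y ->
  [/\ all (fun a => 0 <= a) (next_x y),
      \sum_(a <- next_x y) a <= \sum_(a <- y) a
    & (size y <= size (next_x y) + (nu_of y).*2)%N].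
Proof.
move=> Hy; have Ht := tok_tnn _ Hy.
have [E1 E2 E3] := tok_props y.
rewrite /next_x /nu_of /zero_runs nu_runs -E1 -E2.
move: Ht E3; case: (tok y) => [|[a|m] t] Ht Hn.
- by split; rewrite ?big_nil ?tE.
- move: Ht => /= /andP [Ha Ht].
  have [H1 H2 H3] := rebuild_props _ _ _ (ltnSn (size t)) Ha Ht.
  by split; rewrite ?tE.
- case: t Ht Hn => [|[a|m'] t] Ht Hn.
  + split; rewrite ?big_nil ?tE //; have := uph2 m; rewrite -!muln2; lia.
  + move: Ht => /= /andP [Ha Ht].
    have [H1 H2 H3] := rebuild_props _ _ _ (ltnSn (size t)) Ha Ht.
    split; rewrite ?tE //; move: H3; have := uph2 m; rewrite -!muln2; lia.
  + by [].
Qed.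
End Tok.

Section Main.
Variable R : realFieldType.

Lemma foldr_min_le (x : seq R) d : foldr Order.min d x <= d /\
  forall a, a \in x -> foldr Order.min d x <= a.
Proof.
elim: x => [|b x [IH1 IH2]] /=; first by split.
split; first by rewrite ge_min IH1 orbT.
move=> a; rewrite inE => /orP [/eqP ->|Ha]; first by rewrite ge_min lexx.
by rewrite ge_min IH2 ?orbT.
Qed.

Lemma foldr_min_ge0 (x : seq R) d : 0 <= d -> all (fun a => 0 <= a) x ->
  0 <= foldr Order.min d x.
Proof.
move=> Hd; elim: x => [|b x IH] //= /andP [Hb Hx].
by rewrite le_min Hb IH.
Qed.

Lemma seqmin_ge0 (x : seq R) : all (fun a => 0 <= a) x -> 0 <= seqmin x.
Proof.
move=> Hx; apply: foldr_min_ge0 => //.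
by case: x Hx => [|b x] //= /andP [].
Qed.

Lemma shiftmin_ge0 (x : seq R) : all (fun a => 0 <= a) (shiftmin x).
Proof.
apply/allP => b /mapP [a Ha ->]; rewrite subr_ge0.
by have [_ H] := foldr_min_le x (head 0 x); apply: H.
Qed.

Lemma sum_shiftmin (x : seq R) (m : R) :
  \sum_(a <- [seq a - m | a <- x]) a = \sum_(a <- x) a - (size x)%:R * m.
Proof.
elim: x => [|b x IH]; first by rewrite !big_nil mul0r subr0.
rewrite /= !big_cons IH -addn1 natrD mulrDl mul1r; ring.
Qed.

Lemma prefix_sum (y : seq R) p : all (fun a => 0 <= a) y ->
  0 <= \sum_(l < p) y`_l <= \sum_(a <- y) a.
Proof.
elim: y p => [|b y IH] p.
  by move=> _; rewrite big_nil big1 ?lexx // => l _; rewrite nth_nil.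
move=> /= /andP [Hb Hy]; case: p => [|p].
  rewrite big_ord0 lexx big_cons /=; apply: addr_ge0 => //.
  by rewrite big_seq sumr_ge0 // => a Ha; exact: (allP Hy a Ha).
rewrite big_ord_recl big_cons /=.
have /andP [H1 H2] := IH p Hy.
by rewrite addr_ge0 //= lerD2l.
Qed.

Definition SS (x : seq R) (N n : nat) (L : R) :=
  L - 2 * \sum_(1 <= l < n.+1) algII_mu x N l * (algII_N x N l)%:R.

Lemma ysum_step (x : seq R) N n L (s := iter n (@algII_step R) (x, N)) :
  all (fun a => 0 <= a) s.1 -> (2 * s.2 <= size s.1)%N ->
  \sum_(a <- s.1) a <= SS x N n L ->
  \sum_(a <- shiftmin s.1) a <= SS x N n.+1 L.
Proof.
move=> H1 H2 H3.
rewrite /shiftmin sum_shiftmin /SS big_nat_recr //=.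
have -> : algII_mu x N n.+1 = seqmin s.1 by [].
have -> : algII_N x N n.+1 = s.2 by [].
have Hm := seqmin_ge0 _ H1.
have : (2 * s.2)%:R * seqmin s.1 <= (size s.1)%:R * seqmin s.1.
  by rewrite ler_wpM2r // ler_nat.
move: H3; rewrite /SS natrM => H3 H4.
set S := \sum_(1 <= l < n.+1) _ in H3 *.
rewrite mulrDr; lra.
Qed.

Lemma invariant (x : seq R) N L n (s := iter n (@algII_step R) (x, N)) :
  all (fun a => 0 < a) x -> size x = (2 * N)%N -> \sum_(a <- x) a <= L ->
  [/\ all (fun a => 0 <= a) s.1, (2 * s.2 <= size s.1)%N &
    \sum_(a <- s.1) a <= SS x N n L].
Proof.
move=> Hp Hs HL; rewrite /s {s}.
elim: n => [|n [H1 H2 H3]].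
  split => //=; last by rewrite /SS big_geq // mulr0 subr0.
    by apply/allP => a Ha; apply: ltW; exact: (allP Hp a Ha).
  by rewrite Hs.
have Hy := ysum_step _ _ _ _ H1 H2 H3.
rewrite iterS; set s := iter n _ _ in H1 H2 H3 Hy *.
rewrite /algII_step /=.
have [G1 G2 G3] := @next_props R _ (shiftmin_ge0 s.1).
split => //.
- move: G3 H2; rewrite {1}/shiftmin size_map -!muln2.
  move: (size s.1) (size (next_x _)) (nu_of _) s.2 => a b c d; lia.
- exact: le_trans G2 Hy.
Qed.

Lemma Nn_mono (x : seq R) N k : (algII_N x N k.+1 <= algII_N x N k)%N.
Proof.
case: k => [|k] //.
by rewrite /algII_N /algII_state /= leq_subr.
Qed.

Lemma lam_min (x : seq R) N i k :
  algII_lambda x N (minn i k) =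
  \sum_(1 <= l < i.+1) (if (l <= k)%N then algII_mu x N l else 0).
Proof.
rewrite /algII_lambda; case: (leqP i k) => Hik.
  apply: eq_big_nat => l /andP [_ Hl].
  by rewrite ifT //; lia.
have Hki : (k.+1 <= i.+1)%N by lia.
rewrite [RHS](big_cat_nat _ (n:=k.+1)) //=.
rewrite [X in _ = _ + X](eq_big_nat _ _ (F2 := fun=> 0)); last first.
  by move=> l /andP [Hl _]; rewrite ifF //; lia.
rewrite big1_eq addr0; apply: eq_big_nat => l /andP [_ Hl].
by rewrite ifT //; lia.
Qed.

Lemma partB (x : seq R) N u i : algII_N x N u.+1 = 0%N -> (1 <= i <= u)%N ->
  \sum_(1 <= k < u.+1)
     Order.min (algII_lambda x N i) (algII_lambda x N k) * (algII_nu x N k)%:R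
  <= \sum_(1 <= l < i.+1) algII_mu x N l * (algII_N x N l)%:R.
Proof.
move=> HN Hi.
apply: (@le_trans _ _ (\sum_(1 <= k < u.+1)
   algII_lambda x N (minn i k) * (algII_nu x N k)%:R)).
  apply: ler_sum => k _; rewrite ler_wpM2r //.
  case: (leqP i k) => Hik.
    by rewrite ge_min lexx.
  by rewrite ge_min lexx orbT.
under eq_bigr => k _ do rewrite lam_min mulr_suml.
rewrite exchange_big /= le_eqVlt; apply/orP; left; apply/eqP; apply: eq_big_nat => l /andP [Hl1 Hl2].
under eq_bigr => k _.
  rewrite (_ : _ * _ =
   algII_mu x N l * (if (l <= k)%N then (algII_nu x N k)%:R else 0));
   last by case: ifP; rewrite ?mul0r ?mulr0.
  over.
rewrite -mulr_sumr; congr (_ * _).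
have Hlu : (l <= u.+1)%N by lia.
rewrite (big_cat_nat _ (n:=l)) //=.
rewrite [X in X + _](eq_big_nat _ _ (F2 := fun=> 0)); last first.
  by move=> k /andP [_ Hk]; rewrite ifF //; lia.
rewrite big1_eq add0r.
rewrite (eq_big_nat _ _ (F2 := fun k => - (algII_N x N k.+1)%:R - - (algII_N x N k)%:R)); last first.
  move=> k /andP [Hk _]; rewrite ifT // /algII_nu natrB ?Nn_mono //; ring.
rewrite telescope_sumr; last by lia.
by rewrite HN; ring.
Qed.
End Main.
Theorem mainTheorem10 (R : realFieldType) (L : R) (N : nat) (x : seq R) (u : nat) :
  0 < L -> (1 <= N)%N ->
  size x = (2 * N)%N ->
  all (fun a => 0 < a) x ->
  highest_weight x ->
  \sum_(a <- x) a <= L ->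
  (* u is the stopping index of Algorithm II: the first i >= 1 with N^{(i+1)} = 0 *)
  (1 <= u)%N ->
  algII_N x N u.+1 = 0%N ->
  (forall i, (1 <= i < u)%N -> algII_N x N i.+1 <> 0%N) ->
  forall i j, (1 <= i <= u)%N -> (j < size (zero_runs (algII_y x N i)))%N ->
    let y := algII_y x N i in
    let r := \sum_(l < (nth (0, 0) (zero_runs y) j).1) y`_l in
    0 <= r <= algII_q x N u L i.
Proof.
move=> HL HN Hs Hp Hhw Hsum Hu HNu Hstop i j Hi Hj.
case: i Hi Hj => [|n] Hi Hj //.
set y := algII_y x N n.+1.
change (0 <= \sum_(l < (nth (0, 0) (zero_runs y) j).1) y`_l <= algII_q x N u L n.+1).
have [H1 H2 H3] := @invariant R x N L n Hp Hs Hsum.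
have Hy := @ysum_step R x N n L H1 H2 H3.
have /andP [P1 P2] := @prefix_sum R y (nth (0, 0) (zero_runs y) j).1 (@shiftmin_ge0 R (iter n (@algII_step R) (x, N)).1).
have HB := @partB R x N u n.+1 HNu Hi.
rewrite P1 /=.
have : \sum_(a <- y) a <= SS R x N n.+1 L by exact: Hy.
move: HB P2; rewrite /algII_q /SS.
set A := \sum_(1 <= k < u.+1) _.
set B := \sum_(1 <= l < n.+2) _.
set C := \sum_(a <- y) a.
set D := \sum_(l < _) _.
move=> *; lra.
Qed.
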